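(* There exists a pair of SBP operators $D_+, D_-$ (in the sense defined in the context) which is nullspace consistent but does not have the eigenvalue property. That is, there exist $n$, an interval $[a,b]$, and data $D_+, D_-, H, S, \mathbf{p}_0, \mathbf{p}_n, \mathbf{x}$ satisfying conditions (A)–(E) for some order $q\ge 1$, such that $\ker D_+ = \operatorname{span}\{\mathbf{1}\}$, but the matrix $\tilde D_+ = D_+ + H^{-1}\mathbf{p}_0\mathbf{p}_0^\top$ has an eigenvalue with non-positive real part.
   Context: Let $[a,b]$ be an interval with $b>a$ and $n\ge 1$. For $\mathbf{x}\in\mathbb{R}^{n+1}$, $\mathbf{x}^j$ denotes elementwise exponentiation, with $\mathbf{x}^0=\mathbf{1}=(1,\dots,1)^\top$. Matrices $D_+, D_-\in\mathbb{R}^{(n+1)\times(n+1)}$ form a pair of SBP (summation-by-parts) operators of order $q\ge 1$ on $[a,b]$ if there exist matrices $H,S\in\mathbb{R}^{(n+1)\times(n+1)}$ and vectors $\mathbf{p}_0,\mathbf{p}_n,\mathbf{x}\in\mathbb{R}^{n+1}$ such that: (A) $D_\pm \mathbf{x}^j = j\mathbf{x}^{j-1}$, $\mathbf{p}_0^\top\mathbf{x}^j = a^j$, $\mathbf{p}_n^\top \mathbf{x}^j = b^j$ for $j=0,\dots,q$ (with $0\cdot\mathbf{x}^{-1}:=\mathbf{0}$); (B) $H=H^\top$ is positive definite; (C) $HD_+ + D_+^\top H = -\mathbf{p}_0\mathbf{p}_0^\top + \mathbf{p}_n\mathbf{p}_n^\top + S$ with $S=S^\top$ positive semidefinite; (D)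 $HD_+ + D_-^\top H = -\mathbf{p}_0\mathbf{p}_0^\top + \mathbf{p}_n\mathbf{p}_n^\top$; (E) $\mathbf{x}=(x_0,\dots,x_n)^\top$ with $x_i\ne x_j$ for $i\ne j$. The SBP operator is called nullspace consistent if $\ker D_+=\operatorname{span}\{\mathbf{1}\}$. Set $\tilde D_+ := D_+ + H^{-1}\mathbf{p}_0\mathbf{p}_0^\top$. The SBP operator has the eigenvalue property if every eigenvalue of $\tilde D_+$ has strictly positive real part. *)

(* Defs.v *)
From mathcomp Require Import all_boot all_order all_algebra.
From mathcomp Require Import Rstruct complex.
From Stdlib Require Import Reals.
Set Implicit Arguments. Unset Strict Implicit. Unset Printing Implicit Defensive.
Import Order.TTheory GRing.Theory Num.Theory ComplexField.
Local Open Scope ring_scope.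

Section SBP.
Variable R : rcfType.

Definition xpow m (x : 'cV[R]_m) (j : nat) : 'cV[R]_m := \col_i (x i 0 ^+ j).

Definition posdef m (H : 'M[R]_m) : Prop :=
  H^T = H /\ forall v : 'cV[R]_m, v != 0 -> 0 < (v^T *m H *m v) 0 0.

Definition possemidef m (S : 'M[R]_m) : Prop :=
  S^T = S /\ forall v : 'cV[R]_m, 0 <= (v^T *m S *m v) 0 0.

Definition SBP_pair n (a b : R) (q : nat) (Dp Dm H S : 'M[R]_n.+1)
    (p0 pn x : 'cV[R]_n.+1) : Prop :=
  [/\
      (forall j : nat, leq j q ->
         [/\ Dp *m xpow x j = j%:R *: xpow x j.-1,
             Dm *m xpow x j = j%:R *: xpow x j.-1,
             p0^T *m xpow x j = (a ^+ j)%:M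
           & pn^T *m xpow x j = (b ^+ j)%:M]),
      posdef H,
      H *m Dp + Dp^T *m H = - (p0 *m p0^T) + pn *m pn^T + S /\ possemidef S,
      H *m Dp + Dm^T *m H = - (p0 *m p0^T) + pn *m pn^T
    &
      injective (fun i : 'I_n.+1 => x i 0)].

Definition nullspace_consistent m (Dp : 'M[R]_m) : Prop :=
  forall v : 'cV[R]_m, Dp *m v = 0 <-> exists c : R, v = c *: const_mx 1.

Definition Dtilde m (Dp H : 'M[R]_m) (p0 : 'cV[R]_m) : 'M[R]_m :=
  Dp + invmx H *m (p0 *m p0^T).

Definition ceigenvalue m (A : 'M[R]_m) (lam : R[i]) : bool :=
  eigenvalue (map_mx (fun r : R => (r%:C)%C) A) lam.

End SBP.

(* Main.v *)
Require Import Defs.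
From mathcomp Require Import all_boot all_order all_algebra.
From mathcomp Require Import Rstruct complex.
From Stdlib Require Import Reals.
From mathcomp Require Import ring lra.
Import Order.TTheory GRing.Theory Num.Theory ComplexField.
Local Open Scope ring_scope.

Definition Df (R : rcfType) (i j : nat) : R :=
  match i with
  | 0 => match j with | 0 => -(1) | 1 => (0) | 2 => (5/11) | 3 => (10/11) | 4 => (9/11) | _ => -(13/11) end
  | 1 => match j with | 0 => (0) | 1 => (0) | 2 => -(75/176) | 3 => (35/88) | 4 => -(91/176) | _ => (6/11) end
  | 2 => match j with | 0 => -(2/11) | 1 => (45/176) | 2 => (0) | 3 => -(119/176) | 4 => (21/88) | _ => (4/11) end
  | 3 => match j with | 0 => -(4/11) | 1 => -(21/88) | 2 => (119/176) | 3 => (0) | 4 => -(45/176) | _ => (2/11) end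
  | 4 => match j with | 0 => -(6/11) | 1 => (91/176) | 2 => -(35/88) | 3 => (75/176) | 4 => (0) | _ => (0) end
  | _ => match j with | 0 => (13/11) | 1 => -(9/11) | 2 => -(10/11) | 3 => -(5/11) | 4 => (0) | _ => (1) end
  end.
Definition hf (R : rcfType) (i : nat) : R :=
  match i with 0 => 1/2 | 1 => 3/4 | 2 => 5/4 | 3 => 5/4 | 4 => 3/4 | _ => 1/2 end.
Definition hif (R : rcfType) (i : nat) : R :=
  match i with 0 => 2 | 1 => 4/3 | 2 => 4/5 | 3 => 4/5 | 4 => 4/3 | _ => 2 end.

Definition DM (R : rcfType) : 'M[R]_6 := \matrix_(i, j) Df R i j.
Definition HM (R : rcfType) : 'M[R]_6 := \matrix_(i, j) (if i == j then hf R i else 0).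
Definition HiM (R : rcfType) : 'M[R]_6 := \matrix_(i, j) (if i == j then hif R i else 0).
Definition p0V (R : rcfType) : 'cV[R]_6 := \col_i (if (i : nat) == 0%N then 1 else 0).
Definition pnV (R : rcfType) : 'cV[R]_6 := \col_i (if (i : nat) == 5%N then 1 else 0).
Definition xV (R : rcfType) : 'cV[R]_6 := \col_i ((i : nat)%:R).

Ltac ordcase i := let H := fresh "Hi" in
  case: i => [[|[|[|[|[|[|i]]]]]] H] //.

Lemma HHi (R : rcfType) : HM R *m HiM R = 1%:M.
Proof.
apply/matrixP => i j; ordcase i; ordcase j;
rewrite !mxE !big_ord_recr big_ord0 /= !mxE /=; lra.
Qed.


Ltac mxx := repeat progress (rewrite ?mxE ?big_ord_recr ?big_ord0 /=).

Lemma D1 (R : rcfType) : DM R *m xpow (xV R) 0 = 0.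
Proof. apply/matrixP => i j; ordcase i; ordcase j; mxx; lra. Qed.
Lemma Dx (R : rcfType) : DM R *m xpow (xV R) 1 = xpow (xV R) 0.
Proof. apply/matrixP => i j; ordcase i; ordcase j; mxx; lra. Qed.
Lemma p0x (R : rcfType) (j : nat) : leq j 1 -> (p0V R)^T *m xpow (xV R) j = (0 ^+ j)%:M.
Proof. case: j => [|[|]] // _; apply/matrixP => i j; ordcase i; ordcase j; mxx; lra. Qed.
Lemma pnx (R : rcfType) (j : nat) : leq j 1 -> (pnV R)^T *m xpow (xV R) j = (5 ^+ j)%:M.
Proof. case: j => [|[|]] // _; apply/matrixP => i j; ordcase i; ordcase j; mxx; lra. Qed.
Lemma SBPeq (R : rcfType) : HM R *m DM R + (DM R)^T *m HM R =
   - (p0V R *m (p0V R)^T) + pnV R *m (pnV R)^T.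
Proof. apply/matrixP => i j; ordcase i; ordcase j; mxx; lra. Qed.




Definition yrV (R : rcfType) : 'rV[R]_6 := \row_j
  (match (j : nat) with 1 => 2 | 2 => -2 | 3 => -2 | 4 => 2 | _ => 0 end).
Definition yiV (R : rcfType) : 'rV[R]_6 := \row_j
  (match (j : nat) with 1 => -1 | 2 => 3 | 3 => -3 | 4 => 1 | _ => 0 end).

Lemma invH (R : rcfType) : invmx (HM R) = HiM R.
Proof.
have [hu _] := mulmx1_unit (HHi R).
by rewrite -[RHS](mulKmx hu) HHi mulmx1.
Qed.

Lemma eyr (R : rcfType) : yrV R *m Dtilde (DM R) (HM R) (p0V R) = - yiV R.
Proof. rewrite /Dtilde invH; apply/matrixP => i j; ordcase i; ordcase j; mxx; lra. Qed.
Lemma eyi (R : rcfType) : yiV R *m Dtilde (DM R) (HM R) (p0V R) = yrV R.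
Proof. rewrite /Dtilde invH; apply/matrixP => i j; ordcase i; ordcase j; mxx; lra. Qed.

Lemma lift_eig (R : rcfType) n (A : 'M[R]_n) (yr yi : 'rV[R]_n) :
  yr *m A = - yi -> yi *m A = yr -> yr != 0 ->
  ceigenvalue A 'i%C.
Proof.
move=> h1 h2 nz; apply/eigenvalueP.
pose f := real_complex R.
exists (map_mx f yr + 'i%C *: map_mx f yi).
  have -> : map_mx (fun r : R => (r%:C)%C) A = map_mx f A by [].
  rewrite mulmxDl -scalemxAl -!map_mxM h1 h2 map_mxN scalerDr scalerA.
  have -> : ('i * 'i = -1 :> R[i])%C by apply/eqP; rewrite eq_complex /= !mul0r; apply/andP; split; apply/eqP; ring.
  by rewrite scaleN1r addrC.
apply: contra nz => /eqP h; apply/eqP/matrixP => i j.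
move/matrixP: h => /(_ i j); rewrite !mxE => /eqP; rewrite eq_complex /= => /andP[/eqP h _].
move: h; rewrite mul0r mul1r subr0 addr0 => ->.
by [].
Qed.



Lemma sqpos (R : rcfType) (a : R) : a != 0 -> 0 < a ^+ 2.
Proof. by move=> h; rewrite lt0r sqrf_eq0 h sqr_ge0. Qed.

Lemma posH (R : rcfType) : posdef (HM R).
Proof.
split.
  by apply/matrixP => i j; rewrite !mxE eq_sym; case: eqP => // ->.
move=> v nz.
pose w (k : nat) : R := v (inord k) 0.
have vE : forall i : 'I_6, v i 0 = w i by move=> i; rewrite /w inord_val.
have [k hk] : exists k : 'I_6, v k 0 != 0.
  apply/existsP; apply: contraR nz; rewrite negb_exists => /forallP h.
  apply/eqP/matrixP => i j; rewrite (ord1 j) mxE; apply/eqP.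
  by move: (h i); rewrite negbK.
rewrite vE in hk.
have s0 := sqr_ge0 (w 0%N); have s1 := sqr_ge0 (w 1%N); have s2 := sqr_ge0 (w 2%N);
have s3 := sqr_ge0 (w 3%N); have s4 := sqr_ge0 (w 4%N); have s5 := sqr_ge0 (w 5%N).
have := @sqpos _ _ hk; clear hk.
mxx; rewrite !vE /=.
ordcase k => /= hp; nra.
Qed.

Lemma injx (R : rcfType) : injective (fun i : 'I_6 => xV R i 0).
Proof. by move=> i j /=; rewrite !mxE => /eqP; rewrite eqr_nat => /eqP /val_inj. Qed.

Lemma nullD (R : rcfType) : nullspace_consistent (DM R).
Proof.
move=> v; split; last first.
  move=> [c ->]; rewrite -scalemxAr.
  have -> : const_mx 1 = xpow (xV R) 0 by apply/matrixP => i j; rewrite !mxE expr0.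
  by rewrite D1 scaler0.
move/matrixP => h.
pose w (k : nat) : R := v (inord k) 0.
have vE : forall i : 'I_6, v i 0 = w i by move=> i; rewrite /w inord_val.
have e0 := h (inord 0) 0; have e1 := h (inord 1) 0; have e2 := h (inord 2) 0;
have e3 := h (inord 3) 0; have e4 := h (inord 4) 0; have e5 := h (inord 5) 0.
move: e0 e1 e2 e3 e4 e5; mxx; rewrite !vE !inordK //= => e0 e1 e2 e3 e4 e5.
exists (w 0%N); apply/matrixP => i j; rewrite (ord1 j) !mxE vE.
ordcase i; rewrite /=; lra.
Qed.

Lemma main (R : rcfType) :
  exists (n : nat) (a b : R) (q : nat)
         (Dp Dm H S : 'M[R]_n.+1) (p0 pn x : 'cV[R]_n.+1),
    [/\ [/\ leq 1 n, a < b & leq 1 q],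
        SBP_pair a b q Dp Dm H S p0 pn x,
        nullspace_consistent Dp
      & exists lam : R[i],
          ceigenvalue (Dtilde Dp H p0) lam /\ complex.Re lam <= 0].
Proof.
exists 5%N, 0, 5, 1%N, (DM R), (DM R), (HM R), 0, (p0V R), (pnV R), (xV R).
split.
- by split => //; lra.
- split.
  + move=> j hj; split.
    * by case: j hj => [|[|]] // _; [rewrite D1 scale0r | rewrite Dx scale1r].
    * by case: j hj => [|[|]] // _; [rewrite D1 scale0r | rewrite Dx scale1r].
    * exact: p0x.
    * exact: pnx.
  + exact: posH.
  + split; first by rewrite addr0 SBPeq.
    split; first by rewrite trmx0.
    by move=> v; rewrite mulmx0 mul0mx mxE.
  + exact: SBPeq.
  + exact: injx.
- exact: nullD.
- exists 'i%C; split; last by rewrite /=.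
  apply: (@lift_eig _ _ _ _ _ (eyr R) (eyi R)).
  apply/eqP => /matrixP /(_ 0 (inord 1)); rewrite !mxE inordK //=.
  by move/eqP; rewrite pnatr_eq0.
Qed.

Theorem theorem1 :
  exists (n : nat) (a b : Rdefinitions.R) (q : nat)
         (Dp Dm H S : 'M[Rdefinitions.R]_n.+1) (p0 pn x : 'cV[Rdefinitions.R]_n.+1),
    [/\ [/\ leq 1 n, a < b & leq 1 q],
        SBP_pair a b q Dp Dm H S p0 pn x,
        nullspace_consistent Dp
      & exists lam : Rdefinitions.R[i],
          ceigenvalue (Dtilde Dp H p0) lam /\ complex.Re lam <= 0].
Proof. exact: main. Qed.
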